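(* Consider Method 1.1 (described in the context) applied to the problem $\min\{f(x):x\in D\}$. Suppose the method does not terminate, the generated sequence $\{y_i\}_{i\in K}$ is bounded, and the numbers $\varepsilon_k$ are chosen so that $\varepsilon_k>0$ for all $k\in K$ and $\varepsilon_k\to0$ as $k\to\infty$. Then (the sequence $\{x_k\}_{k\in K}$ is defined for all $k$ and) every limit point of $\{x_k\}_{k\in K}$ belongs to $X^*$; and if moreover $f(x_{k+1})\ge f(x_k)$ for all $k\in K$, then $\operatorname{dist}(x_k,X^* )\to0$ as $k\to\infty$.
   Context: Setting: $f_j$, $j\in J=\{1,\dots,m\}$, are convex functions on $\mathbb{R}^n$; $D=\{x:f_j(x)\le0,\ j\in J\}$; $f$ is continuous on $\mathbb{R}^n$ and attains its minimum on $D$; each $D_j=\{x:f_j(x)\le0\}$ has nonempty interior. Notation: $K=\{0,1,2,\dots\}$; $F(x)=\max_{j}f_j(x)$; $D_\varepsilon=\{x:F(x)\le\varepsilon\}$; $f^*=\min_D f$; $X^*=\{x\in D: f(x)=f^*\}$; $E^*=\{x: f(x)\le f^*\}$; $W^1(x,D_j)=\{a\in\mathbb{R}^n:\|a\|=1,\ \langle a,z-x\rangle\le0\ \forall z\in D_j\}$. Method 1.1: Fix $x^*\in X^*$. Choose a closed convex $M_0\subset\mathbb{R}^n$ with $x^*\in M_0$, points $v^j\in\operatorname{int}D_j$ ($j\in J$), a number $\varepsilon_0\ge0$, and a constant $q\in[1,\infty)$; set $k=0$, $i=0$. Step 1: choose $y_i\in M_i\cap E^*$. Step 2: let $J_i=\{j\in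 J: y_i\notin D_j\}$; if $J_i=\emptyset$, stop. Step 3: if $y_i\notin D_{\varepsilon_k}$, choose a closed convex $G_i\subset\mathbb{R}^n$ with $x^*\in G_i$ and set $Q_i=M_i\cap G_i$; otherwise set $i_k=i$, $x_k=y_{i_k}$, choose a closed convex $Q_i$ with $x^*\in Q_i$, choose $\varepsilon_{k+1}\ge0$ and increase $k$ by one. Step 4: for each $j\in J_i$ choose $z_i^j$ in the open segment $(v^j,y_i)$ with $z_i^j\notin\operatorname{int}D_j$ such that for some $q_i^j\in[1,q]$ the point $y_i+q_i^j(z_i^j-y_i)$ lies in $D_j$; for $j\in J\setminus J_i$ set $z_i^j=y_i$. Step 5: choose $H_i\subset J_i$ containing an index $j_i$ with $\|y_i-z_i^{j_i}\|=\max_{j\in J_i}\|y_i-z_i^j\|$. Step 6: for each $j\in H_i$ choose a nonempty finite set $A_i^j\subset W^1(z_i^j,D_j)$, set $M_{i+1}=Q_i\cap\{x:\langle a,x-z_i^j\rangle\le0\ \forall j\in H_i,\ a\in A_i^j\}$, increase $i$ by one and go to Step 1. *)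

(* Defs.v *)
(* Vectors of R^n are row vectors 'rV[R]_n
   over an abstract R : realType, with the Euclidean inner product and norm
   defined below (the topology of 'rV[R]_n from MathComp-Analysis is the usual
   one, so `closed`, `interior`, `continuous` are the standard notions). *)
From HB Require Import structures.
From mathcomp Require Import all_boot all_order all_algebra.
From mathcomp Require Import all_classical all_reals topology normedtype.
Set Implicit Arguments. Unset Strict Implicit. Unset Printing Implicit Defensive.
Import Order.TTheory GRing.Theory Num.Theory.
Import numFieldNormedType.Exports.
Local Open Scope classical_set_scope.
Local Open Scope ring_scope.

Definition dotp {R : realType} {n : nat} (a b : 'rV[R]_n) : R :=
  \sum_(i < n) a ord0 i * b ord0 i.
Definition enorm {R : realType} {n : nat} (a : 'rV[R]_n) : R :=
  Num.sqrt (dotp a a).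

Definition convex_setE {R : realType} {n : nat} (A : set 'rV[R]_n) : Prop :=
  forall x y (t : R), A x -> A y -> 0 <= t -> t <= 1 ->
    A (t *: x + (1 - t) *: y).

Definition convex_funE {R : realType} {n : nat} (g : 'rV[R]_n -> R) : Prop :=
  forall x y (t : R), 0 <= t -> t <= 1 ->
    g (t *: x + (1 - t) *: y) <= t * g x + (1 - t) * g y.

Definition Dj {R : realType} {n m : nat} (fs : 'I_m -> 'rV[R]_n -> R) (j : 'I_m)
  : set 'rV[R]_n := [set x | fs j x <= 0].
Definition Dset {R : realType} {n m : nat} (fs : 'I_m -> 'rV[R]_n -> R)
  : set 'rV[R]_n := [set x | forall j, fs j x <= 0].
(* D_eps = {x : F(x) <= eps}, F = max_j f_j (i.e. f_j(x) <= eps for all j) *)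
Definition Deps {R : realType} {n m : nat} (fs : 'I_m -> 'rV[R]_n -> R) (eps : R)
  : set 'rV[R]_n := [set x | forall j, fs j x <= eps].

(* f^* = min_D f (= inf, the minimum being attained) *)
Definition fstar {R : realType} {n m : nat} (fs : 'I_m -> 'rV[R]_n -> R)
  (f : 'rV[R]_n -> R) : R := inf (f @` Dset fs).
Definition Xstar {R : realType} {n m : nat} (fs : 'I_m -> 'rV[R]_n -> R)
  (f : 'rV[R]_n -> R) : set 'rV[R]_n :=
  [set x | Dset fs x /\ f x = fstar fs f].
Definition Estar {R : realType} {n m : nat} (fs : 'I_m -> 'rV[R]_n -> R)
  (f : 'rV[R]_n -> R) : set 'rV[R]_n := [set x | f x <= fstar fs f].

Definition W1 {R : realType} {n : nat} (x : 'rV[R]_n) (C : set 'rV[R]_n)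
  : set 'rV[R]_n :=
  [set a | enorm a = 1 /\ forall z, C z -> dotp a (z - x) <= 0].

Definition open_seg {R : realType} {n : nat} (v y : 'rV[R]_n) : set 'rV[R]_n :=
  [set z | exists t : R, 0 < t /\ t < 1 /\ z = (1 - t) *: v + t *: y].

Definition dist_to_set {R : realType} {n : nat} (x : 'rV[R]_n) (X : set 'rV[R]_n) : R :=
  inf [set enorm (x - z) | z in X].

Definition seq_cluster_pt {R : realType} {n : nat} (u : nat -> 'rV[R]_n)
  (p : 'rV[R]_n) : Prop :=
  forall e : R, 0 < e -> forall N : nat, exists k, (N <= k)%N /\ enorm (u k - p) < e.

(* A (non-terminating) run of Method 1.1.  The counter k in force at the start
   of iteration i is kc i; x k is the point x_k = y_{i_k}; eps k is eps_k.
   Q, G, M are the sets of the method, z i j = z_i^j, H i = H_i,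
   A i j = A_i^j (a finite set given as a list).  Step 2 is not recorded here:
   non-termination (J_i <> empty for every i) is a separate hypothesis. *)
Definition method11_run {R : realType} {n m : nat}
  (fs : 'I_m -> 'rV[R]_n -> R) (f : 'rV[R]_n -> R) (xstar : 'rV[R]_n)
  (v : 'I_m -> 'rV[R]_n) (q : R) (eps : nat -> R)
  (M Q G : nat -> set 'rV[R]_n) (y : nat -> 'rV[R]_n)
  (z : nat -> 'I_m -> 'rV[R]_n) (H : nat -> set 'I_m)
  (A : nat -> 'I_m -> seq 'rV[R]_n) (kc : nat -> nat) (x : nat -> 'rV[R]_n)
  : Prop :=
  (closed (M 0%N) /\ convex_setE (M 0%N) /\ M 0%N xstar /\
   (forall j, interior (Dj fs j) (v j)) /\ 0 <= eps 0%N /\ 1 <= q /\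
   kc 0%N = 0%N) /\
  forall i : nat,
  (* Step 1 *)
  (M i (y i) /\ Estar fs f (y i)) /\
  (* Step 3 *)
  (~ Deps fs (eps (kc i)) (y i) ->
     closed (G i) /\ convex_setE (G i) /\ G i xstar /\
     Q i = M i `&` G i /\ kc i.+1 = kc i) /\
  (Deps fs (eps (kc i)) (y i) ->
     x (kc i) = y i /\ closed (Q i) /\ convex_setE (Q i) /\ Q i xstar /\
     kc i.+1 = (kc i).+1) /\
  (* Step 4 *)
  (forall j, ~ Dj fs j (y i) ->
     open_seg (v j) (y i) (z i j) /\ ~ interior (Dj fs j) (z i j) /\
     exists qq : R, 1 <= qq /\ qq <= q /\ Dj fs j (y i + qq *: (z i j - y i))) /\
  (forall j, Dj fs j (y i) -> z i j = y i) /\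
  (* Step 5 *)
  (forall j, H i j -> ~ Dj fs j (y i)) /\
  (exists ji, H i ji /\
     forall j, ~ Dj fs j (y i) -> enorm (y i - z i j) <= enorm (y i - z i ji)) /\
  (* Step 6 *)
  (forall j, H i j -> A i j != [::] /\
     forall a, a \in A i j -> W1 (z i j) (Dj fs j) a) /\
  M i.+1 = Q i `&` [set w | forall j, H i j -> forall a, a \in A i j ->
                                 dotp a (w - z i j) <= 0].

(* Main.v *)
From HB Require Import structures.
From mathcomp Require Import all_boot all_order all_algebra.
From mathcomp Require Import all_classical all_reals topology normedtype.
Import Order.TTheory GRing.Theory Num.Theory.
Import numFieldNormedType.Exports.
Local Open Scope classical_set_scope.
Local Open Scope ring_scope.
Require Import Defs.
From mathcomp Require Import ring lra.
Section Aux.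
Variables (R : realType) (n : nat).
Implicit Types (u w a b c : 'rV[R]_n).

Lemma coord_le_norm u i : `|u ord0 i| <= `|u|.
Proof.
have /mapP[j Hj ->] : `|u ord0 i| \in [seq `|u x.1 x.2| | x : 'I_1 * 'I_n].
  by apply/mapP; exists (ord0, i) => //=; rewrite mem_enum.
by rewrite [leRHS]/Num.Def.normr /= mx_normrE; apply/bigmax_geP; right => /=; exists j.
Qed.

Lemma norm_le_coord u e : 0 <= e -> (forall i, `|u ord0 i| <= e) -> `|u| <= e.
Proof.
move=> e0 H; rewrite /Num.Def.normr /= mx_normrE (bigmax_le _ e0) //= => -[i j] _.
by rewrite /= (ord1 i); apply: H.
Qed.

Lemma dotp_ge0 u : 0 <= dotp u u.
Proof. by apply: sumr_ge0 => i _; rewrite -expr2 sqr_ge0. Qed.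

Lemma norm_le_enorm u : `|u| <= enorm u.
Proof.
apply: norm_le_coord; first exact: sqrtr_ge0.
move=> i; rewrite -sqrtr_sqr ler_sqrt; last exact: dotp_ge0.
rewrite /dotp (bigD1 i) //= expr2 lerDl.
by apply: sumr_ge0 => k _; rewrite -expr2 sqr_ge0.
Qed.

Lemma enorm_le_norm u : enorm u <= n.+1%:R * `|u|.
Proof.
rewrite /enorm -[X in _ <= X]ger0_norm; last by rewrite mulr_ge0.
rewrite -sqrtr_sqr ler_sqrt; last exact: sqr_ge0.
apply: (@le_trans _ _ (\sum_(i < n) `|u| ^+ 2)).
  apply: ler_sum => i _; rewrite -expr2 -real_normK ?num_real //.
  by rewrite lerXn2r ?nnegrE ?normr_ge0 // coord_le_norm.
rewrite sumr_const card_ord exprMn -(mulr_natl (`|u| ^+ 2) n); apply: ler_wpM2r; first exact: sqr_ge0.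
by rewrite expr2 -natrM ler_nat; apply: (leq_trans (leqnSn n)); rewrite mulSn leq_addr.
Qed.

Lemma dotpDr a b c : dotp a (b + c) = dotp a b + dotp a c.
Proof. by rewrite /dotp -big_split /=; apply: eq_bigr => i _; rewrite mxE mulrDr. Qed.
Lemma dotpZr a (k : R) b : dotp a (k *: b) = k * dotp a b.
Proof. by rewrite /dotp mulr_sumr; apply: eq_bigr => i _; rewrite mxE mulrCA. Qed.
Lemma dotpNr a b : dotp a (- b) = - dotp a b.
Proof. by rewrite -scaleN1r dotpZr mulN1r. Qed.
Lemma dotpBr a b c : dotp a (b - c) = dotp a b - dotp a c.
Proof. by rewrite dotpDr dotpNr. Qed.
Lemma dotpZl a (k : R) b : dotp (k *: a) b = k * dotp a b.
Proof. by rewrite /dotp mulr_sumr; apply: eq_bigr => i _; rewrite mxE mulrA. Qed.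
Lemma dotpC a b : dotp a b = dotp b a.
Proof. by apply: eq_bigr => i _; rewrite mulrC. Qed.

Lemma enormZ (k : R) u : enorm (k *: u) = `|k| * enorm u.
Proof.
rewrite /enorm dotpZl dotpZr mulrA -expr2 sqrtrM ?sqr_ge0 //.
by rewrite sqrtr_sqr.
Qed.

Lemma enormB u w : enorm (u - w) = enorm (w - u).
Proof. by rewrite -opprB -scaleN1r enormZ normrN1 mul1r. Qed.

Lemma dotp_unit a : enorm a = 1 -> dotp a a = 1.
Proof. by move=> h; rewrite -(sqr_sqrtr (dotp_ge0 a)) -/(enorm a) h expr1n. Qed.

Lemma dotp_le a w : enorm a = 1 -> dotp a w <= n%:R * `|w|.
Proof.
move=> h; apply: (@le_trans _ _ (\sum_(i < n) `|w|)); last first.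
  by rewrite sumr_const card_ord mulr_natl.
apply: ler_sum => i _; apply: (le_trans (ler_norm _)).
rewrite normrM -[X in _ <= X]mul1r ler_pM ?normr_ge0 ?coord_le_norm //.
by rewrite -h (le_trans (coord_le_norm a i)) ?norm_le_enorm.
Qed.


Lemma BW (u : nat -> 'rV[R]_n) r : (forall k, `|u k| <= r) ->
  exists p, forall e, 0 < e -> forall N, exists k, (N <= k)%N /\ `|u k - p| < e.
Proof.
move=> ub.
have cK : compact [set v : 'rV[R]_n | forall i, `[-r, r]%classic (v ord0 i)].
  exact: (@rV_compact R n (fun _ => `[-r, r]%classic) (fun _ => @segment_compact R (-r) r)).
have Fb : (u @ \oo) [set v : 'rV[R]_n | forall i, `[-r, r]%classic (v ord0 i)].
  exists 0%N => //= k _ i; rewrite in_itv /= -ler_norml.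
  by apply: le_trans (ub k); rewrite coord_le_norm.
have [p [_ cl]] := cK (u @ \oo) (fmap_proper_filter _ _) Fb.
exists p => e e0 N.
have [w [[k Nk ->] bl]] := cl [set w | exists2 k, (N <= k)%N & w = u k]
   (ball p e) (ex_intro2 _ _ N I (fun k Nk => ex_intro2 _ _ k Nk erefl))
   (nbhsx_ballx p e e0).
by exists k; split => //; rewrite distrC; move: bl; rewrite -ball_normE.
Qed.

Lemma scale_delta_coord u (c : R) (ik i : 'I_n) :
  (u + c *: delta_mx ord0 ik) ord0 i = u ord0 i + (if i == ik then c else 0).
Proof. by rewrite !mxE eqxx /=; case: (i == ik); rewrite ?mulr1 ?mulr0. Qed.

Lemma convex_box (g : 'rV[R]_n -> R) p : convex_funE g ->
  exists B, g p <= B /\ forall u, `|u - p| <= 1 -> g u <= B.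
Proof.
move=> cg.
pose vert (s : {ffun 'I_n -> bool}) := p + \row_i (if s i then 1 else -1 : R).
exists (\big[Num.max/g p]_(s : {ffun 'I_n -> bool}) g (vert s)); split.
  by elim/big_rec: _ => // s b _ hb; rewrite le_max hb orbT.
suff H : forall k u, (forall i, `|u ord0 i - p ord0 i| <= 1) ->
   (forall i : 'I_n, (k <= i)%N -> `|u ord0 i - p ord0 i| = 1) ->
   g u <= \big[Num.max/g p]_(s : {ffun 'I_n -> bool}) g (vert s).
  move=> u hu; apply: (H n) => [i|i]; last by rewrite leqNgt ltn_ord.
  by have := coord_le_norm (u - p) i; rewrite !mxE => h; exact: le_trans h hu.
elim=> [|k IH] u hb hv.
  pose s := [ffun i => u ord0 i - p ord0 i == 1].
  have -> : u = vert s.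
    apply/rowP => i; rewrite !mxE ffunE.
    have := hv i (leq0n _); case: (eqVneq (u ord0 i - p ord0 i) 1) => [<-|ne].
      by rewrite addrC subrK.
    move/eqP; rewrite eqr_norml => /andP[/orP[/eqP h|/eqP h] _].
      by rewrite h eqxx in ne.
    by rewrite -h addrC subrK.
  exact: (le_bigmax _ (fun s => g (vert s)) s).
case: (ltnP k n) => kn; last first.
  apply: IH => // i ki; have := ltn_ord i; rewrite ltnNge (leq_trans kn ki) //.
pose ik := Ordinal kn.
pose d := u ord0 ik - p ord0 ik.
pose u1 := u + (1 - d) *: delta_mx ord0 ik.
pose u2 := u + (-1 - d) *: delta_mx ord0 ik.
have hd : `|d| <= 1 by apply: hb.
move: (hd); rewrite ler_norml => /andP[hd1 hd2].
pose l := (1 + d) / 2.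
have eu : u = l *: u1 + (1 - l) *: u2.
  by apply/rowP => i; rewrite !mxE /l; field.
have hc : forall (c : R) (j : 'I_n), `|c| = 1 -> (forall i : 'I_n, (k.+1 <= i)%N -> `|u ord0 i - p ord0 i| = 1) ->
   `|(u + (c - d) *: delta_mx ord0 ik) ord0 j - p ord0 j| <= 1 /\
   ((k <= j)%N -> `|(u + (c - d) *: delta_mx ord0 ik) ord0 j - p ord0 j| = 1).
  move=> c j hcd hv'; rewrite scale_delta_coord.
  case: (eqVneq j ik) => [->|ne].
    have -> : u ord0 ik + (c - d) - p ord0 ik = c by rewrite /d; ring.
    by rewrite hcd.
  rewrite addr0; split; first exact: hb.
  move=> ki; apply: hv'; rewrite ltn_neqAle ki andbT.
  by apply: contra ne => /eqP h; apply/eqP/val_inj; rewrite /= h.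
have [h1 _] := hc 1 ik (normr1 _) hv.
have [h2 _] := hc (-1) ik (normrN1 _) hv.
have g1 : g u1 <= \big[Num.max/g p]_(s : {ffun 'I_n -> bool}) g (vert s).
  apply: IH => j; first by have [] := hc 1 j (normr1 _) hv.
  by have [] := hc 1 j (normr1 _) hv.
have g2 : g u2 <= \big[Num.max/g p]_(s : {ffun 'I_n -> bool}) g (vert s).
  apply: IH => j; first by have [] := hc (-1) j (normrN1 _) hv.
  by have [] := hc (-1) j (normrN1 _) hv.
have l0 : 0 <= l by rewrite /l; lra.
have l1 : l <= 1 by rewrite /l; lra.
rewrite eu; apply: le_trans (cg _ _ _ l0 l1) _.
set B := \big[Num.max/g p]_(s : {ffun 'I_n -> bool}) g (vert s).
have h1' : l * g u1 <= l * B by apply: ler_wpM2l.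
have h2' : (1 - l) * g u2 <= (1 - l) * B by apply: ler_wpM2l => //; rewrite subr_ge0.
apply: le_trans (lerD h1' h2') _.
by have -> : l * B + (1 - l) * B = B by ring.
Qed.


Lemma convex_cont (g : 'rV[R]_n -> R) p : convex_funE g ->
  forall e, 0 < e -> exists2 eta, 0 < eta &
    forall u, `|u - p| < eta -> `|g u - g p| < e.
Proof.
move=> cg e e0; have [B [Bp HB]] := @convex_box g p cg.
have key : forall u, `|u - p| <= 1 -> `|g u - g p| <= `|u - p| * (B - g p).
  move=> u hu; set s := `|u - p|.
  have [s0|s0] := eqVneq s 0.
    have -> : u = p by apply/eqP; rewrite -subr_eq0 -normr_eq0 -/s s0.
    by rewrite subrr normr0 s0 mul0r.
  have sp : 0 < s by rewrite lt_def s0 normr_ge0.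
  pose w := p + s^-1 *: (u - p).
  pose w' := p - s^-1 *: (u - p).
  have hw : `|w - p| <= 1.
    by rewrite /w addrAC subrr add0r normrZ -/s ger0_norm ?invr_ge0 ?normr_ge0 // mulVf.
  have hw' : `|w' - p| <= 1.
    by rewrite /w' addrAC subrr add0r normrN normrZ -/s ger0_norm ?invr_ge0 ?normr_ge0 // mulVf.
  have e1 : u = s *: w + (1 - s) *: p.
    by apply/rowP => i; rewrite !mxE; field.
  have c1 := cg w p s (ltW sp) hu; rewrite -e1 in c1.
  pose t := (1 + s)^-1.
  have s1 : 1 + s != 0 by apply: lt0r_neq0; lra.
  have t0 : 0 <= t by rewrite invr_ge0; lra.
  have t1 : t <= 1 by rewrite invf_le1; lra.
  have ht : t * (1 + s) = 1 by rewrite mulVf.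
  have e2 : p = t *: u + (1 - t) *: w'.
    by apply/rowP => i; rewrite !mxE /t; field; rewrite s1 s0.
  have c2 := cg u w' t t0 t1; rewrite -e2 in c2.
  have gw := HB w hw; have gw' := HB w' hw'.
  have m1 := ler_wpM2l (ltW sp) gw.
  have m2 := ler_wpM2l (ltW sp) gw'.
  rewrite ler_norml; apply/andP; split; last by nra.
  have : (1 + s) * g p <= (1 + s) * (t * g u + (1 - t) * g w').
    by apply: ler_wpM2l => //; lra.
  have -> : (1 + s) * (t * g u + (1 - t) * g w') = g u + s * g w'.
    by rewrite /t; field.
  nra.
pose K := B - g p + 1.
have K0 : 0 < K by rewrite /K; lra.
exists (Num.min 1 (e / K)) => [|u hu].
  by rewrite lt_min ltr01 divr_gt0.
move: hu; rewrite lt_min => /andP[hu1 hu2].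
apply: le_lt_trans (key u (ltW hu1)) _.
apply: (@le_lt_trans _ _ (`|u - p| * K)).
  by apply: ler_wpM2l; rewrite ?normr_ge0 // /K lerDl.
by rewrite -ltr_pdivlMr.
Qed.

Lemma fin_unif m (P : 'I_m -> R -> Prop) :
  (forall j r r', 0 < r' -> r' <= r -> P j r -> P j r') ->
  (forall j, exists2 r, 0 < r & P j r) -> exists2 r, 0 < r & forall j, P j r.
Proof.
move=> mono h.
suff [r r0 hr] : exists2 r, 0 < r & forall j, j \in enum 'I_m -> P j r.
  by exists r => // j; apply: hr; rewrite mem_enum.
elim: (enum 'I_m) => [|j s [r r0 IH]]; first by exists 1.
have [r' r'0 hj] := h j.
exists (Num.min r r'); first by rewrite lt_min r0 r'0.
move=> i; rewrite inE => /orP[/eqP ->|iis].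
  by apply: mono hj; rewrite ?lt_min ?r0 ?r'0 // ge_min lexx orbT.
by apply: mono (IH i iis); rewrite ?lt_min ?r0 ?r'0 // ge_min lexx.
Qed.

End Aux.
Arguments coord_le_norm {R n}.
Arguments norm_le_coord {R n}.
Arguments dotp_ge0 {R n}.
Arguments norm_le_enorm {R n}.
Arguments enorm_le_norm {R n}.
Arguments dotpDr {R n}.
Arguments dotpZr {R n}.
Arguments dotpNr {R n}.
Arguments dotpBr {R n}.
Arguments dotpZl {R n}.
Arguments dotpC {R n}.
Arguments enormZ {R n}.
Arguments enormB {R n}.
Arguments dotp_unit {R n}.
Arguments dotp_le {R n}.
Arguments BW {R n}.
Arguments scale_delta_coord {R n}.
Arguments convex_box {R n}.
Arguments convex_cont {R n}.
Arguments fin_unif {R}.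

Theorem theorem1p1p2 (R : realType) (n m : nat)
  (fs : 'I_m -> 'rV[R]_n -> R) (f : 'rV[R]_n -> R) (xstar : 'rV[R]_n)
  (v : 'I_m -> 'rV[R]_n) (q : R) (eps : nat -> R)
  (M Q G : nat -> set 'rV[R]_n) (y : nat -> 'rV[R]_n)
  (z : nat -> 'I_m -> 'rV[R]_n) (H : nat -> set 'I_m)
  (A : nat -> 'I_m -> seq 'rV[R]_n) (kc : nat -> nat) (x : nat -> 'rV[R]_n) :
  (* standing assumptions *)
  (forall j, convex_funE (fs j)) ->
  continuous f ->
  (exists xm, Dset fs xm /\ forall w, Dset fs w -> f xm <= f w) ->
  (forall j, exists w, interior (Dj fs j) w) ->
  Xstar fs f xstar ->
  (* the method's run *)
  method11_run fs f xstar v q eps M Q G y z H A kc x ->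
  (* it does not terminate *)
  (forall i, exists j, ~ Dj fs j (y i)) ->
  (* {y_i} bounded *)
  (exists r : R, forall i, enorm (y i) <= r) ->
  (forall k, 0 < eps k) ->
  eps @ \oo --> (0 : R) ->
  (forall k, exists i, kc i = k /\ kc i.+1 = k.+1) /\
  (forall p, seq_cluster_pt x p -> Xstar fs f p) /\
  ((forall k, f (x k) <= f (x k.+1)) ->
     (fun k => dist_to_set (x k) (Xstar fs f)) @ \oo --> (0 : R)).
Proof.
move=> cvx fcont [xm [xmD xmmin]] _ Xx [[_ [_ [_ [vint [_ [q1 kc0]]]]]] run]
  nonterm [ry ybd] epspos epscvg.
have ybd' : forall i, `|y i| <= ry.
  by move=> i; apply: le_trans (ybd i); apply: norm_le_enorm.
have fstar_le : forall w, Dset fs w -> fstar fs f <= f w.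
  move=> w Dw; apply: ge_inf; last by exists w.
  by exists (f xm) => _ [u Du <-]; apply: xmmin.
have kcD : forall i, Deps fs (eps (kc i)) (y i) ->
    x (kc i) = y i /\ kc i.+1 = (kc i).+1.
  move=> i hD; have [_ [_ [H3 _]]] := run i.
  by have [e1 [_ [_ [_ e2]]]] := H3 hD.
have kcN : forall i, ~ Deps fs (eps (kc i)) (y i) -> kc i.+1 = kc i.
  move=> i hD; have [_ [H3 _]] := run i.
  by have [_ [_ [_ [_ e2]]]] := H3 hD.
have stuck : forall i0 k, ~ (forall i, (i0 <= i)%N -> kc i = k).
  move=> i0 k st.
  have nD : forall i, (i0 <= i)%N -> ~ Deps fs (eps k) (y i).
    move=> i hi hD; rewrite -(st i hi) in hD; have := (kcD _ hD).2.
    by rewrite (st i hi) (st i.+1 (leqW hi)); apply: n_Sn.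
  have Msub : forall i, (i0 <= i)%N -> M i.+1 `<=` M i.
    move=> i hi w; have [_ [H3 [_ [_ [_ [_ [_ [_ Meq]]]]]]]] := run i.
    have [_ [_ [_ [eQ _]]]] := H3 (ltac:(rewrite (st i hi); exact: nD)).
    by rewrite Meq eQ => -[[]].
  have Mmono : forall l d, (i0 <= l)%N -> M (l.+1 + d)%N `<=` M l.+1.
    move=> l; elim=> [|d IH] hl; first by rewrite addn0.
    rewrite addnS => w /Msub h; apply: IH => //; apply: h.
    exact: (leq_trans hl (leq_trans (leqnSn l) (leq_addr d l.+1))).
  have ycut : forall l i, (i0 <= l)%N -> (l < i)%N -> forall j, H l j ->
      forall a, a \in A l j -> dotp a (y i - z l j) <= 0.
    move=> l i hl li j hj a ha.
    have [[My _] _] := run i.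
    have : M l.+1 (y i) by have := Mmono l (i - l.+1)%N hl; rewrite subnKC //; apply.
    have [_ [_ [_ [_ [_ [_ [_ [_ Meq]]]]]]]] := run l.
    by rewrite Meq => -[_ /(_ j hj a ha)].
  have [r r0 hr] : exists2 r, 0 < r & forall j w, `|v j - w| < r -> Dj fs j w.
    apply: (fin_unif _ (fun j (r : R) => forall w, `|v j - w| < r -> Dj fs j w)).
      move=> j r1 r2 r20 r21 h w hw; apply: h; exact: lt_le_trans hw r21.
    move=> j; have [e e0 he] := (nbhs_ballP _ _).1 (vint j).
    by exists e => // w hw; apply: he; rewrite -ball_normE.
  set Bv := \sum_j enorm (v j).
  have Bv0 : 0 <= Bv by apply: sumr_ge0 => i _; exact: sqrtr_ge0.
  have vB : forall j, `|v j| <= Bv.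
    move=> j; apply: le_trans (norm_le_enorm _) _; rewrite /Bv (bigD1 j) //= lerDl.
    by apply: sumr_ge0 => i _; exact: sqrtr_ge0.
  have ry0 : 0 <= ry by apply: le_trans (ybd' 0%N); exact: normr_ge0.
  set C := ry + Bv + 1.
  have C0 : 0 < C by rewrite /C; lra.
  have geo : forall l j a, ~ Dj fs j (y l) -> W1 (z l j) (Dj fs j) a ->
      r / 2 * `|y l - z l j| <= C * dotp a (y l - z l j).
    move=> l j a nj [ea wa].
    have [_ [_ [_ [S4a _]]]] := run l.
    have [[t [t0 [t1 ez]]] _] := S4a j nj.
    have hva : `|v j - (v j + (r / 2) *: a)| < r.
      rewrite opprD addNKr normrN normrZ ger0_norm ?divr_ge0 ?ltW //.
      apply: (@le_lt_trans _ _ (r / 2 * enorm a)).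
        by apply: ler_wpM2l; [rewrite divr_ge0 ?ltW | exact: norm_le_enorm].
      by rewrite ea mulr1; lra.
    have hv := wa _ (hr j _ hva).
    have e1 : v j + (r / 2) *: a - z l j = (r / 2) *: a - t *: (y l - v j).
      by rewrite ez; apply/rowP => i; rewrite !mxE; ring.
    have e2 : y l - z l j = (1 - t) *: (y l - v j).
      by rewrite ez; apply/rowP => i; rewrite !mxE; ring.
    rewrite e1 dotpBr !dotpZr dotp_unit // mulr1 in hv.
    rewrite e2 dotpZr normrZ ger0_norm; last by lra.
    set D := dotp a (y l - v j) in hv *.
    have yv : `|y l - v j| <= C.
      apply: le_trans (ler_normB _ _) _; rewrite /C.
      have := ybd' l; have := vB j; lra.
    have hD : r / 2 <= D.
      have htD : r / 2 <= t * D by lra.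
      have Dp : 0 <= D by rewrite -(pmulr_rge0 _ t0); lra.
      apply: le_trans htD _; rewrite -[X in _ <= X]mul1r; apply: ler_wpM2r => //; lra.
    have h1 : r / 2 * ((1 - t) * `|y l - v j|) <= r / 2 * ((1 - t) * C).
      apply: ler_wpM2l; first by rewrite divr_ge0 ?ltW.
      by apply: ler_wpM2l => //; lra.
    apply: le_trans h1 _.
    have -> : r / 2 * ((1 - t) * C) = (C * (1 - t)) * (r / 2) by ring.
    have -> : C * ((1 - t) * D) = (C * (1 - t)) * D by ring.
    by apply: ler_wpM2l hD; apply: mulr_ge0; lra.
  set K1 := n.+1%:R * (2 * C * n%:R / r).
  have K10 : 0 <= K1.
    rewrite /K1; apply: mulr_ge0 => //; apply: divr_ge0; last exact: ltW.
    by apply: mulr_ge0 => //; apply: mulr_ge0 => //; exact: ltW.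
  have key : forall l i, (i0 <= l)%N -> (l < i)%N -> forall j, ~ Dj fs j (y l) ->
      enorm (y l - z l j) <= K1 * `|y l - y i|.
    move=> l i hl li j nj.
    have [_ [_ [_ [_ [_ [S5a [[jl [Hjl jlmax]] [S6 _]]]]]]]] := run l.
    have [Ane Aw] := S6 jl Hjl.
    have [a ha] : exists a, a \in A l jl.
      by case: (A l jl) Ane => // a0 s _; exists a0; rewrite mem_head.
    have [ea _] := Aw a ha.
    have g := geo l jl a (S5a jl Hjl) (Aw a ha).
    have cut := ycut l i hl li jl Hjl a ha.
    have hdl := dotp_le a (y l - y i) ea.
    have gd : dotp a (y l - z l jl) = dotp a (y l - y i) + dotp a (y i - z l jl).
      by rewrite -dotpDr addrA subrK.
    have g2 : r / 2 * `|y l - z l jl| <= C * (n%:R * `|y l - y i|).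
      by apply: le_trans g _; apply: ler_wpM2l; [exact: ltW | rewrite gd; lra].
    have g3 : `|y l - z l jl| <= 2 * C * n%:R / r * `|y l - y i|.
      have r2 : 0 < r / 2 by rewrite divr_gt0.
      have : `|y l - z l jl| * (r / 2) <= C * (n%:R * `|y l - y i|) by rewrite mulrC.
      rewrite -ler_pdivlMr // => h; apply: le_trans h _.
      rewrite le_eqVlt; apply/orP; left; apply/eqP; field; lra.
    apply: le_trans (jlmax j nj) _.
    apply: le_trans (enorm_le_norm _) _.
    rewrite /K1 -mulrA; apply: ler_wpM2l => //.
  have [p hp] := BW _ _ ybd'.
  have e2 : 0 < eps k / 2 by rewrite divr_gt0.
  have [eta eta0 heta] := fin_unif _
     (fun j (e : R) => forall u, `|u - p| < e -> `|fs j u - fs j p| < eps k / 2)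
     (fun j r1 r2 _ h21 h u hu => h u (lt_le_trans hu h21))
     (fun j => convex_cont (fs j) p (cvx j) _ e2).
  have qK0 : 0 <= 2 * q * K1 by apply: mulr_ge0 => //; apply: mulr_ge0 => //; lra.
  set L := 1 + 2 * q * K1.
  have L1 : 1 <= L by rewrite /L; lra.
  have L0 : L != 0 by apply: lt0r_neq0; lra.
  set dl := eta / L.
  have dl0 : 0 < dl by rewrite divr_gt0 //; lra.
  have dle : dl * L = eta by rewrite /dl mulrAC -mulrA mulfV // mulr1.
  have dlle : dl <= eta by rewrite -dle -[X in X <= _]mulr1 ler_wpM2l // ltW.
  have [l [hl hyl]] := hp dl dl0 i0.
  have [i [hi hyi]] := hp dl dl0 l.+1.
  apply: (nD l hl) => j.
  case: (pselect (Dj fs j (y l))) => hj.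
    by apply: le_trans hj (ltW (epspos k)).
  have [_ [_ [_ [S4a _]]]] := run l.
  have [_ [_ [qq [qq1 [qqq wD]]]]] := S4a j hj.
  have kk := key l i hl hi j hj.
  have dly : `|y l - y i| < 2 * dl.
    apply: le_lt_trans (ler_distD p (y l) (y i)) _.
    by rewrite (distrC p); lra.
  have wy : `|y l + qq *: (z l j - y l) - y l| <= q * (K1 * `|y l - y i|).
    rewrite addrAC subrr add0r normrZ ger0_norm; last by lra.
    apply: ler_pM; rewrite ?normr_ge0 //; first by lra.
    by apply: le_trans (norm_le_enorm _) _; rewrite enormB.
  have m1 : q * (K1 * `|y l - y i|) <= q * (K1 * (2 * dl)).
    apply: ler_wpM2l; first by lra.
    by apply: ler_wpM2l => //; apply: ltW.
  have wp : `|y l + qq *: (z l j - y l) - p| < eta.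
    apply: le_lt_trans (ler_distD (y l) _ _) _.
    have -> : eta = q * (K1 * (2 * dl)) + dl by rewrite -dle /L; ring.
    by lra.
  have := heta j _ wp; have := heta j _ (lt_le_trans hyl dlle).
  rewrite !ltr_norml => /andP[h1 h2] /andP[h3 h4].
  move: wD; rewrite /Dj /= => wD.
  by rewrite /Deps /=; lra.
have step : forall k i, kc i = k -> exists i', kc i' = k /\ kc i'.+1 = k.+1.
  move=> k i hi; apply: contrapT => hn; apply: (stuck i k).
  elim=> [|i' IH] hi'.
    by rewrite leqn0 in hi'; rewrite -(eqP hi').
  case: (eqVneq i i'.+1) => [<-//|ne].
  have hk : kc i' = k by apply: IH; rewrite -ltnS ltn_neqAle ne hi'.
  case: (pselect (Deps fs (eps (kc i')) (y i'))) => hD.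
    by exfalso; apply: hn; exists i'; rewrite hk; split => //; rewrite (kcD _ hD).2 hk.
  by rewrite kcN // hk.
have part1 : forall k, exists i, kc i = k /\ kc i.+1 = k.+1.
  suff hk : forall k, exists i, kc i = k.
    by move=> k; have [i hi] := hk k; exact: step hi.
  elim => [|k [i hi]]; first by exists 0%N.
  by have [i' [_ h]] := step k i hi; exists i'.+1.
have xk : forall k, exists i, x k = y i /\ Deps fs (eps k) (y i).
  move=> k; have [i [hi hi1]] := part1 k; exists i.
  case: (pselect (Deps fs (eps (kc i)) (y i))) => hD.
    by rewrite -hi (kcD _ hD).1.
  by move: (kcN _ hD); rewrite hi hi1 => /eqP; rewrite (gtn_eqF (ltnSn k)).
have xbd : forall k, `|x k| <= ry by move=> k; have [i [-> _]] := xk k.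
have xD : forall k j, fs j (x k) <= eps k by move=> k j; have [i [-> h]] := xk k.
have xE : forall k, f (x k) <= fstar fs f.
  by move=> k; have [i [-> _]] := xk k; have [[_ h] _] := run i.
have part2 : forall p, seq_cluster_pt x p -> Xstar fs f p.
  move=> p clp.
  have Dp : Dset fs p.
    move=> j; apply: contrapT => /negP; rewrite -ltNge => hp.
    have hp2 : 0 < fs j p / 2 by rewrite divr_gt0.
    have [eta eta0 heta] := convex_cont (fs j) p (cvx j) _ hp2.
    have [N _ hN] := (cvgrPdist_lt _ _).1 epscvg _ hp2.
    have [k [Nk hk]] := clp eta eta0 N.
    have := heta (x k) (le_lt_trans (norm_le_enorm _) hk).
    have := hN k Nk; rewrite /= sub0r normrN gtr0_norm ?epspos //.
    have := xD k j.
    rewrite ltr_norml => h1 h2 /andP[h3 h4]; lra.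
  split => //; apply/le_anti/andP; split; last exact: fstar_le.
  rewrite leNgt; apply/negP => hlt.
  have e0 : 0 < f p - fstar fs f by rewrite subr_gt0.
  move: (fcont p) => /cvgrPdist_lt /(_ _ e0) hnb.
  have [rho rho0 hrho] := (nbhs_ballP _ _).1 hnb.
  have [k [_ hk]] := clp rho rho0 0%N.
  have bk : ball p rho (x k).
    by rewrite -ball_normE /= distrC; apply: le_lt_trans (norm_le_enorm _) hk.
  have := hrho _ bk; have := xE k; rewrite /= ltr_norml => h1 /andP[h2 h3]; lra.
split => //; split => // _.
have d0 : forall k, 0 <= dist_to_set (x k) (Xstar fs f).
  move=> k; apply: lb_le_inf; first by exists (enorm (x k - xstar)), xstar.
  by move=> _ [w _ <-]; apply: sqrtr_ge0.
have dle : forall k p, Xstar fs f p -> dist_to_set (x k) (Xstar fs f) <= enorm (x k - p).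
  move=> k p Xp; apply: ge_inf; last by exists p.
  by exists 0 => _ [w _ <-]; apply: sqrtr_ge0.
apply/cvgrPdist_lt => e e0.
apply: contrapT => hne.
have io : forall N, exists k, (N <= k)%N /\ ~ (`|0 - dist_to_set (x k) (Xstar fs f)| < e).
  move=> N; apply: contrapT => hN; apply: hne; exists N => // k /= Nk.
  by apply: contrapT => hk; apply: hN; exists k.
have [phi hphi] := choice io.
have [p hp] := BW _ _ (fun N => xbd (phi N)).
have clp : seq_cluster_pt x p.
  move=> e' e'0 N.
  have [N' [NN' hN']] := hp (e' / n.+1%:R) (divr_gt0 e'0 (ltr0Sn _ _)) N.
  exists (phi N'); split; first exact: leq_trans NN' (hphi N').1.
  apply: le_lt_trans (enorm_le_norm _) _; rewrite mulrC -ltr_pdivlMr //.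
have Xp := part2 p clp.
have [N' [_ hN']] := hp (e / n.+1%:R) (divr_gt0 e0 (ltr0Sn _ _)) 0%N.
apply: (hphi N').2; rewrite sub0r normrN ger0_norm ?d0 //.
apply: le_lt_trans (dle _ _ Xp) _.
apply: le_lt_trans (enorm_le_norm _) _; rewrite mulrC -ltr_pdivlMr //.
Qed.
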